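(* Let $\mathcal H$ be a 1-constituent CCRN of order two, and let $A$ be a MAS of $\mathcal H$ with exactly two reactions. Then there is no other MAS of $\mathcal H$ (with a different reaction set) having the same FWMC partition as $A$.
   Context: A chemical reaction network (CRN) consists of a finite species set $\mathcal S$ and a finite set $\mathcal R$ of reactions $r^-\to r^+$ with $r^-\ne r^+\in\mathbb Z_{\ge0}^{\mathcal S}$; input/output matrices $\mathbb S^-,\mathbb S^+$ have columns $r^-,r^+$, and $\mathbb S=\mathbb S^+-\mathbb S^-$. $(\mathbb A)_M^N$ denotes the submatrix with rows in $M$ and columns in $N$; $\mathbf v\gg\mathbf0$ means all entries $>0$, and $\mathbf v>\mathbf0$ means all entries $\ge0$ and $\mathbf v\ne\mathbf0$. A 1-constituent CCRN of order two is a CRN whose species are clusters $\bar 1,\bar2,\dots,\bar L$ (cluster $\bar n$ has size $n$), whose complexes are multisets of at most two clusters, and whose reactions conserve total size: for each reaction $r^-\to r^+$, $\sum_n n\,r^-_{\bar n}=\sum_n n\,r^+_{\bar n}$ (so $\mathbf x=(1,2,\dots,L)$ is a conservation law). A motif $(\mathcal M,\mathcal R')$ ($\mathcal M\subseteq\mathcal S,\mathcal R'\subseteq\mathcal R$) is exclusively autocatalytic if: (i) some $\mathbf v\gg\mathbf0$ in $\mathbb R^{\mathcal R'}$ has $(\mathbb S)_{\mathcal M}^{\mathcal R'}\mathbf v\gg\mathbf 0$; (ii) every row and (iii) every column of $(\mathbb S^-)_{\mathcal M}^{\mathcal R'}$ is semi-positive. An autocatalytic core is an exclusively autocatalytic motif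 $(A_C,\mathcal R_A)$ no proper sub-motif ($\mathcal M'\subseteq A_C$, $\mathcal R''\subseteq\mathcal R_A$) of which is exclusively autocatalytic. The minimal autocatalytic subnetwork (MAS) $A=(\mathcal S_A,\mathcal R_A)$ of a core $(A_C,\mathcal R_A)$ has reaction set $\mathcal R_A$ and species set $\mathcal S_A$ consisting of all species occurring in some input or output complex of a reaction in $\mathcal R_A$; each MAS is assumed to have a unique core. Put $\overline{\mathbb S}=(\mathbb S)_{\mathcal S_A}^{\mathcal R_A}$. FWMC partition of a MAS $A$: the quadruple (food set, waste set, non-core member set, core set), where the food set consists of the species of $\mathcal S_A$ whose row in $\overline{\mathbb S}$ has all entries $\le0$, the waste set those whose row has all entries $\ge0$, the member set those whose row has both a positive and a negative entry, the core set is $A_C$ (contained in the member set), and the non-core member set is the member set minus $A_C$. *)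

(* Defs.v *)
From HB Require Import structures.
From mathcomp Require Import all_boot all_order all_algebra.
From mathcomp Require Export reals.

Set Implicit Arguments.
Unset Strict Implicit.
Unset Printing Implicit Defensive.

Import Order.TTheory GRing.Theory Num.Theory.
Local Open Scope ring_scope.

(* Species of a 1-constituent CCRN: clusters; the species [i : 'I_L]
   is the cluster of size [i.+1].  A complex is a vector of
   nonnegative integers indexed by species. *)
Definition complex (L : nat) := {ffun 'I_L -> nat}.

Section CRN.
Variables (L : nat) (Rx : finType) (N : Rx -> complex L * complex L).

Definition inp (r : Rx) : complex L := (N r).1.
Definition outp (r : Rx) : complex L := (N r).2.

Definition stoich (s : 'I_L) (r : Rx) : int := (outp r s)%:Z - (inp r s)%:Z.

(* A CRN: reactions form a set (no duplicates) and r^- <> r^+. *)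
Definition is_CRN : Prop := injective N /\ (forall r, inp r != outp r).

Definition is_CCRN1_order2 : Prop :=
  is_CRN /\
  forall r : Rx,
    [/\ (\sum_(s : 'I_L) inp r s <= 2)%N,
        (\sum_(s : 'I_L) outp r s <= 2)%N &
        \sum_(s : 'I_L) (s.+1 * inp r s)%N = \sum_(s : 'I_L) (s.+1 * outp r s)%N].

Variable R : realType.

Definition excl_autocatalytic (M : {set 'I_L}) (R' : {set Rx}) : Prop :=
  [/\ M != set0,
      (exists v : Rx -> R,
          (forall r, r \in R' -> 0 < v r) /\
          (forall s, s \in M -> 0 < \sum_(r in R') (stoich s r)%:~R * v r)),
      (forall s, s \in M -> exists2 r, r \in R' & (0 < inp r s)%N) &
      (forall r, r \in R' -> exists2 s, s \in M & (0 < inp r s)%N)].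

Definition autocatalytic_core (AC : {set 'I_L}) (RA : {set Rx}) : Prop :=
  excl_autocatalytic AC RA /\
  forall (M' : {set 'I_L}) (R'' : {set Rx}),
    M' \subset AC -> R'' \subset RA -> (M', R'') != (AC, RA) ->
    ~ excl_autocatalytic M' R''.

(* A reaction set is (the reaction set of) a MAS iff it is the reaction set
   of some autocatalytic core. *)
Definition is_MAS (RA : {set Rx}) : Prop := exists AC, autocatalytic_core AC RA.

Definition has_unique_core (RA : {set Rx}) : Prop :=
  forall C1 C2, autocatalytic_core C1 RA -> autocatalytic_core C2 RA -> C1 = C2.

End CRN.

Section FWMC.
Variables (L : nat) (Rx : finType) (N : Rx -> complex L * complex L).

Definition MAS_species (RA : {set Rx}) : {set 'I_L} :=
  [set s | [exists r in RA, (0 < inp N r s)%N || (0 < outp N r s)%N]].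

Definition food_set (RA : {set Rx}) : {set 'I_L} :=
  [set s in MAS_species RA | [forall r in RA, stoich N s r <= 0]].
Definition waste_set (RA : {set Rx}) : {set 'I_L} :=
  [set s in MAS_species RA | [forall r in RA, 0 <= stoich N s r]].
Definition member_set (RA : {set Rx}) : {set 'I_L} :=
  [set s in MAS_species RA |
     [exists r in RA, 0 < stoich N s r] && [exists r in RA, stoich N s r < 0]].

Definition FWMC (RA : {set Rx}) (AC : {set 'I_L}) :=
  (food_set RA, waste_set RA, member_set RA :\: AC, AC).

End FWMC.

(* Main.v *)
Require Import Defs.
From HB Require Import structures.
From mathcomp Require Import all_boot all_order all_algebra.
From mathcomp Require Import reals.
From mathcomp Require Import zify ring lra.
Set Implicit Arguments.
Unset Strict Implicit.
Unset Printing Implicit Defensive.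
Import Order.TTheory GRing.Theory Num.Theory.

Definition szS (L : nat) (S : {set 'I_L}) (c : complex L) : nat :=
  \sum_(t | t \notin S) t.+1 * c t.
Definition totS (L : nat) (S : {set 'I_L}) (c : complex L) : nat :=
  \sum_(t | t \notin S) c t.

Lemma sum_split (L : nat) (S : {set 'I_L}) (F : 'I_L -> nat) :
  \sum_t F t = \sum_(t in S) F t + \sum_(t | t \notin S) F t.
Proof. by rewrite (bigID (mem S)). Qed.

Lemma sum_set2 (L : nat) (s1 s2 : 'I_L) (F : 'I_L -> nat) : s1 != s2 ->
  \sum_(t in [set s1; s2]) F t = F s1 + F s2.
Proof.
move=> ne; rewrite /setU big_setU1 ?big_set1 //.
by rewrite in_set1.
Qed.

Lemma one_or_none (L : nat) (S : {set 'I_L}) (c : complex L) :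
  totS S c <= 1 ->
  (szS S c = 0 /\ forall t, t \notin S -> c t = 0) \/
  exists u, [/\ u \notin S, szS S c = u.+1, c u = 1 &
     forall t, t \notin S -> t != u -> c t = 0].
Proof.
move=> ht.
case: (pickP (fun u => (u \notin S) && (0 < c u))) => [u /andP[uS cu] | H0].
- have E : totS S c = c u + \sum_(t | (t \notin S) && (t != u)) c t.
    by rewrite /totS (bigD1 u).
  have cu1 : c u = 1 by lia.
  have E0 : \sum_(t | (t \notin S) && (t != u)) c t = 0 by lia.
  have Z : forall t, t \notin S -> t != u -> c t = 0.
    move=> t tS tu; move/eqP: E0; rewrite sum_nat_eq0 => /forallP /(_ t).
    by rewrite tS tu /= => /eqP.
  right; exists u; split => //.
  rewrite /szS (bigD1 u) //= cu1 big1 ?addn0 ?muln1 //.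
  by move=> t /andP[tS tu]; rewrite Z // muln0.
- have Z : forall t, t \notin S -> c t = 0.
    move=> t tS; move: (H0 t) => /=; rewrite tS /=; lia.
  left; split => //; rewrite /szS big1 // => t tS; by rewrite Z // muln0.
Qed.

Lemma cval (L : nat) (S : {set 'I_L}) (c : complex L) :
  totS S c <= 1 -> forall t, t \notin S -> c t = (szS S c == t.+1).
Proof.
move=> /one_or_none [[-> Z] | [u [uS -> cu Z]]] t tS.
- by rewrite Z.
- have [->|tu] := eqVneq t u; first by rewrite cu eqxx.
  rewrite Z //; case: eqP => // [[E]]; move: tu; by rewrite (val_inj E) eqxx.
Qed.

Lemma tot_sz (L : nat) (S : {set 'I_L}) (c : complex L) :
  totS S c <= 1 ->
  (szS S c = 0 /\ totS S c = 0) \/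
  (totS S c = 1 /\ exists2 u, u \notin S & szS S c = u.+1).
Proof.
move=> ht; case: (one_or_none ht) => [[E Z] | [u [uS E cu Z]]].
- by left; split => //; rewrite /totS big1.
- right; split; last by exists u.
  have : c u <= totS S c by rewrite /totS (bigD1 u) //= leq_addr.
  lia.
Qed.

Lemma cplx_eq (L : nat) (S : {set 'I_L}) (c d : complex L) :
  totS S c <= 1 -> totS S d <= 1 -> szS S c = szS S d ->
  (forall t, t \in S -> c t = d t) -> c = d.
Proof.
move=> hc hd hs hS; apply/ffunP => t.
case: (boolP (t \in S)) => tS; first exact: hS.
by rewrite (cval hc tS) (cval hd tS) hs.
Qed.

Lemma decomp1 (L : nat) (s : 'I_L) (F : 'I_L -> nat) :
  \sum_t F t = F s + \sum_(t | t \notin [set s]) F t.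
Proof. by rewrite (sum_split [set s]) big_set1. Qed.

Lemma decomp2 (L : nat) (s1 s2 : 'I_L) (F : 'I_L -> nat) : s1 != s2 ->
  \sum_t F t = F s1 + F s2 + \sum_(t | t \notin [set s1; s2]) F t.
Proof. by move=> ne; rewrite (sum_split [set s1; s2]) sum_set2. Qed.


Lemma ccrn_tot (L : nat) (Rx : finType) (N : Rx -> complex L * complex L) :
  is_CCRN1_order2 N -> forall r,
  [/\ \sum_(s : 'I_L) inp N r s <= 2, \sum_(s : 'I_L) outp N r s <= 2 &
      \sum_(s : 'I_L) (s.+1 * inp N r s)%N = \sum_(s : 'I_L) (s.+1 * outp N r s)%N].
Proof. by case=> _ H r; case: (H r). Qed.

Lemma ccrn_neq (L : nat) (Rx : finType) (N : Rx -> complex L * complex L) :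
  is_CCRN1_order2 N -> forall r, inp N r != outp N r.
Proof. by case=> [[_ H] _]. Qed.

Lemma L0 (L : nat) (Rx : finType) (N : Rx -> complex L * complex L) :
  is_CCRN1_order2 N -> forall r (s : 'I_L), 0 < inp N r s -> 0 < outp N r s -> False.
Proof.
move=> HC r s hi ho.
case: (ccrn_tot HC r) => t1 t2 sz.
move: t1 t2 sz; rewrite (decomp1 s) (decomp1 s (fun t => outp N r t)).
rewrite (decomp1 s (fun t => t.+1 * _)) (decomp1 s (fun t => t.+1 * outp N r t)).
rewrite -/(totS _ _) -/(totS _ (outp N r)) -/(szS _ _) -/(szS _ (outp N r)).
move=> t1 t2 sz.
have hc : totS [set s] (inp N r) <= 1 by lia.
have hd : totS [set s] (outp N r) <= 1 by lia.
have key : inp N r s = outp N r s /\ szS [set s] (inp N r) = szS [set s] (outp N r).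
  case: (tot_sz hc) => [[e1 f1] | [f1 [u uS e1]]];
  case: (tot_sz hd) => [[e2 f2] | [f2 [w wS e2]]].
  - have : inp N r s = 1 \/ inp N r s = 2 by lia.
    have : outp N r s = 1 \/ outp N r s = 2 by lia.
    case=> E1; case=> E2; rewrite E1 E2 in sz *; lia.
  - have : inp N r s = 1 \/ inp N r s = 2 by lia.
    have E2 : outp N r s = 1 by lia.
    have {}wS : (w:nat) <> s by move=> E; move: wS; rewrite in_set1 (val_inj E) eqxx.
    case=> E1; rewrite E1 E2 in sz; lia.
  - have : outp N r s = 1 \/ outp N r s = 2 by lia.
    have E1 : inp N r s = 1 by lia.
    have {}uS : (u:nat) <> s by move=> E; move: uS; rewrite in_set1 (val_inj E) eqxx.
    case=> E2; rewrite E1 E2 in sz; lia.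
  - have E1 : inp N r s = 1 by lia.
    have E2 : outp N r s = 1 by lia.
    rewrite E1 E2 in sz; lia.
case: key => k1 k2.
have : inp N r = outp N r.
  apply: (cplx_eq hc hd k2) => t; rewrite in_set1 => /eqP ->; exact: k1.
by move/eqP; rewrite (negbTE (ccrn_neq HC r)).
Qed.

Lemma pair_sums (L : nat) (Rx : finType) (N : Rx -> complex L * complex L) :
  is_CCRN1_order2 N -> forall (s1 s2 : 'I_L) r, s1 != s2 ->
  let S := [set s1; s2] in
  [/\ inp N r s1 + inp N r s2 + totS S (inp N r) <= 2,
      outp N r s1 + outp N r s2 + totS S (outp N r) <= 2 &
      s1.+1 * inp N r s1 + s2.+1 * inp N r s2 + szS S (inp N r) =
      s1.+1 * outp N r s1 + s2.+1 * outp N r s2 + szS S (outp N r)].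
Proof.
move=> HC s1 s2 r ne S; case: (ccrn_tot HC r).
by rewrite !(decomp2 _ ne).
Qed.

Lemma szS_props (L : nat) (S : {set 'I_L}) (c : complex L) :
  totS S c <= 1 ->
  [/\ szS S c <= L, forall s, s \in S -> szS S c <> s.+1 &
      (totS S c = 0 -> szS S c = 0)].
Proof.
move=> h; case: (tot_sz h) => [[e1 e2] | [e1 [u uS e2]]].
- by split; rewrite ?e1 // => s _.
- split.
  + by rewrite e2; exact: ltn_ord.
  + move=> s sS; rewrite e2 => -[E]; move: uS; by rewrite (val_inj E) sS.
  + by rewrite e1.
Qed.

Lemma rfacts (L : nat) (Rx : finType) (N : Rx -> complex L * complex L) :
  is_CCRN1_order2 N -> forall (s1 s2 : 'I_L) r, s1 != s2 ->
  (inp N r s1 = 0 \/ outp N r s1 = 0) /\ (inp N r s2 = 0 \/ outp N r s2 = 0) /\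
      inp N r s1 + inp N r s2 <= 2 /\ outp N r s1 + outp N r s2 <= 2 /\
      ~ (inp N r s1 = 2 /\ outp N r s2 = 2) /\ ~ (inp N r s2 = 2 /\ outp N r s1 = 2).
Proof.
move=> HC s1 s2 r ne.
have Z : forall s, inp N r s = 0 \/ outp N r s = 0.
  move=> s; case: (posnP (inp N r s)) => [|hi]; first by left.
  case: (posnP (outp N r s)) => [|ho]; first by right.
  by case: (L0 HC hi ho).
case: (pair_sums HC r ne) => t1 t2 sz.
have ne' : (s1 : nat) <> s2 by move=> E; move: ne; rewrite (val_inj E) eqxx.
have hi : totS [set s1; s2] (inp N r) <= 1 \/ totS [set s1; s2] (inp N r) = 2 by lia.
have ho : totS [set s1; s2] (outp N r) <= 1 \/ totS [set s1; s2] (outp N r) = 2 by lia.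
split; first exact: Z. split; first exact: Z.
split; first lia. split; first lia. split.
- case=> e1 e2.
  have h1 : totS [set s1; s2] (inp N r) <= 1 by lia.
  have h2 : totS [set s1; s2] (outp N r) <= 1 by lia.
  case: (szS_props h1) => _ _ z1; case: (szS_props h2) => _ _ z2.
  have f1 : totS [set s1; s2] (inp N r) = 0 by lia.
  have f2 : totS [set s1; s2] (outp N r) = 0 by lia.
  move: (z1 f1) (z2 f2) => g1 g2. lia.
- case=> e1 e2.
  have h1 : totS [set s1; s2] (inp N r) <= 1 by lia.
  have h2 : totS [set s1; s2] (outp N r) <= 1 by lia.
  case: (szS_props h1) => _ _ z1; case: (szS_props h2) => _ _ z2.
  have f1 : totS [set s1; s2] (inp N r) = 0 by lia.
  have f2 : totS [set s1; s2] (outp N r) = 0 by lia.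
  move: (z1 f1) (z2 f2) => g1 g2. lia.
Qed.

Lemma row_contra (R : realType) (L : nat) (Rx : finType) (N : Rx -> complex L * complex L)
  (RX : {set Rx}) (v : Rx -> R) (s1 s2 : 'I_L) (k1 k2 : int) :
  (forall r, r \in RX -> (0 < v r)%R) ->
  (0 < \sum_(r in RX) (stoich N s1 r)%:~R * v r)%R ->
  (0 < \sum_(r in RX) (stoich N s2 r)%:~R * v r)%R ->
  (0 < k1)%R -> (0 < k2)%R ->
  (forall r, r \in RX -> (k1 * stoich N s1 r + k2 * stoich N s2 r <= 0)%R) -> False.
Proof.
move=> vpos h1 h2 k1p k2p H.
have : (\sum_(r in RX) ((k1 * stoich N s1 r + k2 * stoich N s2 r)%:~R * v r) <= 0 :> R)%R.
  apply: sumr_le0 => r rR; apply: mulr_le0_ge0; first by rewrite lerz0; exact: H.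
  exact: ltW (vpos r rR).
have -> : (\sum_(r in RX) ((k1 * stoich N s1 r + k2 * stoich N s2 r)%:~R * v r) =
   k1%:~R * \sum_(r in RX) (stoich N s1 r)%:~R * v r +
   k2%:~R * \sum_(r in RX) (stoich N s2 r)%:~R * v r :> R)%R.
  rewrite !mulr_sumr -big_split /=; apply: eq_bigr => r _.
  by rewrite intrD !intrM mulrDl !mulrA.
have : (0 < k1%:~R :> R)%R by rewrite ltr0z.
have : (0 < k2%:~R :> R)%R by rewrite ltr0z.
move: h1 h2; set a := (\sum_(r in RX) _)%R; set b := (\sum_(r in RX) _)%R.
move=> h1 h2 p2 p1 h.
have : (0 < k1%:~R * a + k2%:~R * b :> R)%R by apply: addr_gt0; apply: mulr_gt0.
by rewrite ltNge h.
Qed.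

Definition PF (L : nat) (Rx : finType) (N : Rx -> complex L * complex L)
  (r : Rx) (s t : 'I_L) (j : nat) : Prop :=
  [/\ inp N r t = 1, inp N r s = 0, outp N r s = j & outp N r t = 0].

Lemma stoichE (L : nat) (Rx : finType) (N : Rx -> complex L * complex L) r s :
  (stoich N s r = (outp N r s)%:Z - (inp N r s)%:Z)%R.
Proof. by []. Qed.

Lemma pair_struct (R : realType) (L : nat) (Rx : finType) (N : Rx -> complex L * complex L)
  (s1 s2 : 'I_L) (RX : {set Rx}) :
  is_CCRN1_order2 N -> s1 != s2 -> autocatalytic_core N R [set s1; s2] RX ->
  exists p q, exists j1 j2 : nat,
    [/\ RX = [set p; q], p != q, PF N p s1 s2 j1, PF N q s2 s1 j2 &
        (j1 = 1 \/ j1 = 2) /\ (j2 = 1 \/ j2 = 2) /\ 2 < j1 + j2].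
Proof.
move=> HC ne [[_ [v [vpos rows]] cii ciii] minim].
have row1 := rows s1 (set21 s1 s2).
have row2 := rows s2 (set22 s1 s2).
have F : forall r, r \in RX ->
   (0 < inp N r s1 \/ 0 < inp N r s2) /\
   (inp N r s1 = 0 \/ outp N r s1 = 0) /\ (inp N r s2 = 0 \/ outp N r s2 = 0) /\
      inp N r s1 + inp N r s2 <= 2 /\ outp N r s1 + outp N r s2 <= 2 /\
      ~ (inp N r s1 = 2 /\ outp N r s2 = 2) /\ ~ (inp N r s2 = 2 /\ outp N r s1 = 2).
  move=> r rR; split; last exact: (rfacts HC r ne).
  case: (ciii r rR) => s; rewrite in_set2 => /orP[] /eqP -> h; by [left | right].
pose P1 r := (0 < outp N r s1) && (inp N r s2 == 1).
pose P2 r := (0 < outp N r s2) && (inp N r s1 == 1).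
have ex : exists p q, [/\ p \in RX, q \in RX, P1 p, P2 q &
            (outp N p s1 == 2) || (outp N q s2 == 2)].
  case: (boolP [exists r in RX, (outp N r s1 == 2) && (inp N r s2 == 1)]).
  - move=> /exists_inP [p pR /andP [o1 i2]].
    case: (boolP [exists r in RX, P2 r]).
    + move=> /exists_inP [q qR Pq]; exists p, q; split => //.
        by rewrite /P1 (eqP o1) i2.
      by rewrite o1.
    + move=> /exists_inPn H; exfalso.
      apply: (row_contra vpos row1 row2 (k1 := 1) (k2 := 2)) => // r rR.
      move: (H r rR) (F r rR); rewrite /P2 stoichE stoichE; lia.
  - move=> /exists_inPn H1.
    case: (boolP [exists r in RX, (outp N r s2 == 2) && (inp N r s1 == 1)]).
    + move=> /exists_inP [q qR /andP [o2 i1]].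
      case: (boolP [exists r in RX, P1 r]).
      * move=> /exists_inP [p pR Pp]; exists p, q; split => //.
          by rewrite /P2 (eqP o2) i1.
        by rewrite o2 orbT.
      * move=> /exists_inPn H; exfalso.
        apply: (row_contra vpos row1 row2 (k1 := 2) (k2 := 1)) => // r rR.
        move: (H r rR) (F r rR); rewrite /P1 stoichE stoichE; lia.
    + move=> /exists_inPn H2; exfalso.
      apply: (row_contra vpos row1 row2 (k1 := 1) (k2 := 1)) => // r rR.
      move: (H1 r rR) (H2 r rR) (F r rR); rewrite stoichE stoichE; lia.
case: ex => p [q [pR qR /andP[op1 ip2] /andP[oq2 iq1] j2]].
move: (F p pR) (F q qR) => Fp Fq.
have Pp : PF N p s1 s2 (outp N p s1) by split => //; [exact/eqP | lia | lia].
have Pq : PF N q s2 s1 (outp N q s2) by split => //; [exact/eqP | lia | lia].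
have pq : p != q by apply/eqP => E; rewrite E in op1 Pp; case: Pq => _ _ _; lia.
have jj : (outp N p s1 = 1 \/ outp N p s1 = 2) /\ (outp N q s2 = 1 \/ outp N q s2 = 2) /\
          2 < outp N p s1 + outp N q s2 by lia.
exists p, q, (outp N p s1), (outp N q s2); split => //.
set j1 := outp N p s1 in Pp jj *; set j2' := outp N q s2 in Pq jj *.
have qp : q != p by rewrite eq_sym.
have EX : excl_autocatalytic N R [set s1; s2] [set p; q].
  split.
  - by apply/set0Pn; exists s1; exact: set21.
  - exists (fun r => (((if r == p then Posz j2'.+1 else Posz (4 - j2')%N)%:~R : R))%R); split.
    + move=> r _; rewrite ltr0z; case: eqP => _; lia.
    + move=> s; rewrite in_set2 => /orP[] /eqP ->;
      rewrite /setU big_setU1 ?big_set1 ?in_set1 //= eqxx (negbTE qp);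
      rewrite -!intrM -intrD ltr0z !stoichE; case: Pp => e1 e2 e3 e4; case: Pq => e5 e6 e7 e8;
      rewrite ?e1 ?e2 ?e3 ?e4 ?e5 ?e6 ?e7 ?e8; lia.
  - move=> s; rewrite in_set2 => /orP[] /eqP ->.
    + by exists q; [exact: set22 | case: Pq => ->].
    + by exists p; [exact: set21 | case: Pp => ->].
  - move=> r; rewrite in_set2 => /orP[] /eqP ->.
    + by exists s2; [exact: set22 | case: Pp => ->].
    + by exists s1; [exact: set21 | case: Pq => ->].
have sub : [set p; q] \subset RX by apply/subsetP => r; rewrite in_set2 => /orP[] /eqP ->.
case: (eqVneq ([set s1; s2], [set p; q]) ([set s1; s2], RX)) => [[]|] // nE.
by case: (minim _ _ (subxx _) sub nE).
Qed.

Lemma core2_species (R : realType) (L : nat) (Rx : finType) (N : Rx -> complex L * complex L)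
  (AC : {set 'I_L}) (RA : {set Rx}) :
  is_CCRN1_order2 N -> autocatalytic_core N R AC RA -> #|RA| = 2 ->
  exists s1 s2, s1 != s2 /\ AC = [set s1; s2].
Proof.
move=> HC [[AC0 [v [vpos rows]] cii ciii] minim] /eqP /cards2P [r1 [r2 [r12 ERA]]].
have r1R : r1 \in RA by rewrite ERA set21.
have r2R : r2 \in RA by rewrite ERA set22.
case: (ciii r1 r1R) => s1 s1A h1.
case: (ciii r2 r2R) => s2 s2A h2.
case: (eqVneq s1 s2) => [E | ne].
- exfalso; rewrite -E in h2 s2A.
  have EX : excl_autocatalytic N R [set s1] RA.
    split.
    + by apply/set0Pn; exists s1; rewrite in_set1.
    + by exists v; split => // s; rewrite in_set1 => /eqP ->; apply: rows.
    + by move=> s; rewrite in_set1 => /eqP ->; exists r1 => //; rewrite ERA set21.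
    + by move=> r; rewrite ERA in_set2 => /orP[] /eqP ->; exists s1; rewrite ?in_set1.
  have sub : [set s1] \subset AC by rewrite sub1set.
  case: (eqVneq ([set s1], RA) (AC, RA)) => [[] AE | nE]; last first.
    by case: (minim _ _ sub (subxx _) nE).
  have r1s := rows s1 s1A.
  apply: (row_contra vpos r1s r1s (k1 := 1) (k2 := 1)) => // r.
  rewrite ERA in_set2 => /orP[] /eqP -> ; rewrite stoichE.
  + have : outp N r1 s1 = 0 by case: (posnP (outp N r1 s1)) => // o; case: (L0 HC h1 o).
    lia.
  + have : outp N r2 s1 = 0 by case: (posnP (outp N r2 s1)) => // o; case: (L0 HC h2 o).
    lia.
- exists s1, s2; split => //.
  have EX : excl_autocatalytic N R [set s1; s2] RA.
    split.
    + by apply/set0Pn; exists s1; rewrite set21.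
    + by exists v; split => // s; rewrite in_set2 => /orP[] /eqP ->; apply: rows.
    + move=> s; rewrite in_set2 => /orP[] /eqP ->.
      * by exists r1 => //; rewrite ERA set21.
      * by exists r2 => //; rewrite ERA set22.
    + move=> r; rewrite ERA in_set2 => /orP[] /eqP ->.
      * by exists s1; rewrite ?set21.
      * by exists s2; rewrite ?set22.
  have sub : [set s1; s2] \subset AC.
    by apply/subsetP => s; rewrite in_set2 => /orP[] /eqP ->.
  case: (eqVneq ([set s1; s2], RA) (AC, RA)) => [[] -> //| nE].
  by case: (minim _ _ sub (subxx _) nE).
Qed.

Lemma in_side (L : nat) (Rx : finType) (N : Rx -> complex L * complex L) (RX : {set Rx}) (u : 'I_L) :
  is_CCRN1_order2 N ->
  (exists2 r, r \in RX & 0 < inp N r u) <-> (u \in food_set N RX) || (u \in member_set N RX).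
Proof.
move=> HC; split.
- move=> [r rR h].
  have o : outp N r u = 0 by case: (posnP (outp N r u)) => // o; case: (L0 HC h o).
  have sp : u \in MAS_species N RX by rewrite inE; apply/exists_inP; exists r => //; rewrite h.
  case: (boolP [forall r' in RX, (stoich N u r' <= 0)%R]) => H.
  + by rewrite inE sp H.
  + apply/orP; right; rewrite inE sp /=; apply/andP; split.
    * move: H => /forall_inPn [r' r'R H]; apply/exists_inP; exists r' => //.
      by move: H; rewrite -ltNge.
    * apply/exists_inP; exists r => //; rewrite stoichE o; lia.
- move=> /orP[].
  + rewrite inE => /andP[sp /forall_inP H]; move: sp; rewrite inE => /exists_inP [r rR /orP[] h].
    * by exists r.
    * have i : inp N r u = 0 by case: (posnP (inp N r u)) => // i; case: (L0 HC i h).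
      move: (H r rR); rewrite stoichE i; lia.
  + rewrite inE => /andP[_ /andP[_ /exists_inP [r rR h]]]; exists r => //.
    move: h; rewrite stoichE; lia.
Qed.

Lemma out_side (L : nat) (Rx : finType) (N : Rx -> complex L * complex L) (RX : {set Rx}) (u : 'I_L) :
  is_CCRN1_order2 N ->
  (exists2 r, r \in RX & 0 < outp N r u) <-> (u \in waste_set N RX) || (u \in member_set N RX).
Proof.
move=> HC; split.
- move=> [r rR h].
  have o : inp N r u = 0 by case: (posnP (inp N r u)) => // o; case: (L0 HC o h).
  have sp : u \in MAS_species N RX by rewrite inE; apply/exists_inP; exists r => //; rewrite h orbT.
  case: (boolP [forall r' in RX, (0 <= stoich N u r')%R]) => H.
  + by rewrite inE sp H.
  + apply/orP; right; rewrite inE sp /=; apply/andP; split.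
    * apply/exists_inP; exists r => //; rewrite stoichE o; lia.
    * move: H => /forall_inPn [r' r'R H]; apply/exists_inP; exists r' => //.
      by move: H; rewrite -ltNge.
- move=> /orP[].
  + rewrite inE => /andP[sp /forall_inP H]; move: sp; rewrite inE => /exists_inP [r rR /orP[] h].
    * have i : outp N r u = 0 by case: (posnP (outp N r u)) => // i; case: (L0 HC h i).
      move: (H r rR); rewrite stoichE i; lia.
    * by exists r.
  + rewrite inE => /andP[_ /andP[/exists_inP [r rR h] _]]; exists r => //.
    move: h; rewrite stoichE; lia.
Qed.

Lemma PF_facts (L : nat) (Rx : finType) (N : Rx -> complex L * complex L) r (s t : 'I_L) j :
  is_CCRN1_order2 N -> s != t -> PF N r s t j -> 1 <= j <= 2 ->
  let S := [set s; t] in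
  [/\ totS S (inp N r) <= 1, totS S (outp N r) <= 1,
     t.+1 + szS S (inp N r) = j * s.+1 + szS S (outp N r),
     (j = 2 -> szS S (outp N r) = 0) &
     (szS S (inp N r) = szS S (outp N r) -> szS S (inp N r) = 0)].
Proof.
move=> HC ne [i1 i2 o1 o2] hj S.
case: (pair_sums HC r ne) => t1 t2 sz.
rewrite i1 i2 o1 o2 in t1 t2 sz.
have h1 : totS S (inp N r) <= 1 by rewrite /S; lia.
have h2 : totS S (outp N r) <= 1 by rewrite /S; lia.
split => //.
- rewrite /S; move: sz; rewrite !muln0 !muln1 ?addn0 ?add0n mulnC; lia.
- move=> j2; case: (szS_props h2) => _ _; apply; rewrite /S; lia.
- move=> E; case: (tot_sz h1) => [[-> //] | [_ [u uS e]]].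
  have c1 := cval h1 uS; have c2 := cval h2 uS.
  rewrite e eqxx in c1; rewrite -E e eqxx in c2.
  by case: (@L0 _ _ _ HC r u); rewrite ?c1 ?c2.
Qed.

Definition valid (L a b j1 j2 Xp Yp Xq Yq : nat) : Prop :=
  (j1 = 1 \/ j1 = 2) /\ (j2 = 1 \/ j2 = 2) /\ 3 <= j1 + j2 /\
  b + Xp = j1*a + Yp /\ a + Xq = j2*b + Yq /\ (j1 = 2 -> Yp = 0) /\ (j2 = 2 -> Yq = 0) /\
  (Xp = Yp -> Xp = 0) /\ (Xq = Yq -> Xq = 0) /\
  Xp <> a /\ Xp <> b /\ Yp <> a /\ Yp <> b /\ Xq <> a /\ Xq <> b /\ Yq <> a /\ Yq <> b /\
  Xp <= L /\ Yp <= L /\ Xq <= L /\ Yq <= L.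

Lemma abstract_uniq (L a b j1 j2 Xp Yp Xq Yq j1' j2' Xp' Yp' Xq' Yq' : nat) :
 0 < a -> 0 < b -> a <> b ->
 valid L a b j1 j2 Xp Yp Xq Yq -> valid L a b j1' j2' Xp' Yp' Xq' Yq' ->
 (forall t, 0 < t -> t <= L -> (t = Xp \/ t = Xq) <-> (t = Xp' \/ t = Xq')) ->
 (forall t, 0 < t -> t <= L -> (t = Yp \/ t = Yq) <-> (t = Yp' \/ t = Yq')) ->
 [/\ j1 = j1', j2 = j2', Xp = Xp', Yp = Yp' & Xq = Xq' /\ Yq = Yq'].
Proof.
move=> ha hb hab V V' HX HY.
destruct V as (hj1 & hj2 & hj & e1 & e2 & y1 & y2 & d1 & d2 & n1 & n2 & n3 & n4 & n5 & n6 & n7 & n8 & l1 & l2 & l3 & l4).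
destruct V' as (hj1' & hj2' & hj' & e1' & e2' & y1' & y2' & d1' & d2' & n1' & n2' & n3' & n4' & n5' & n6' & n7' & n8' & l1' & l2' & l3' & l4').
have A1 : 0 < Xp -> Xp = Xp' \/ Xp = Xq' by move=> h; apply/(HX Xp h l1); left.
have A2 : 0 < Xq -> Xq = Xp' \/ Xq = Xq' by move=> h; apply/(HX Xq h l3); right.
have A3 : 0 < Xp' -> Xp' = Xp \/ Xp' = Xq by move=> h; apply/(HX Xp' h l1'); left.
have A4 : 0 < Xq' -> Xq' = Xp \/ Xq' = Xq by move=> h; apply/(HX Xq' h l3'); right.
have B1 : 0 < Yp -> Yp = Yp' \/ Yp = Yq' by move=> h; apply/(HY Yp h l2); left.
have B2 : 0 < Yq -> Yq = Yp' \/ Yq = Yq' by move=> h; apply/(HY Yq h l4); right.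
have B3 : 0 < Yp' -> Yp' = Yp \/ Yp' = Yq by move=> h; apply/(HY Yp' h l2'); left.
have B4 : 0 < Yq' -> Yq' = Yp \/ Yq' = Yq by move=> h; apply/(HY Yq' h l4'); right.
clear HX HY.
suff H : j1 = j1' /\ j2 = j2' /\ Xp = Xp' /\ Yp = Yp' /\ Xq = Xq' /\ Yq = Yq'
  by case: H => ? [? [? [? [? ?]]]]; split.
case: hj1 => E1; case: hj2 => E2; case: hj1' => E3; case: hj2' => E4; subst j1 j2 j1' j2'.
- exfalso; clear -hj hj'; lia.
- exfalso; clear -hj hj'; lia.
- exfalso; clear -hj hj'; lia.
- exfalso; clear -hj hj'; lia.
- exfalso; clear -hj hj'; lia.
- move: (y2 erefl) => z2. move: (y2' erefl) => z4.  clear y1 y2 y1' y2' A1 A2 A3 A4 B2 B4 d1 d2 n1 n2 n3 n4 n5 n6 n7 n8 d1' d2' n1' n2' n3' n4' n5' n6' n7' n8'. lia.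
- move: (y2 erefl) => z2. move: (y1' erefl) => z3.  clear y1 y2 y1' y2' B2 B3 d1 d2 n1 n2 n3 n4 n5 n6 n7 n8 d1' d2' n1' n2' n3' n4' n5' n6' n7' n8'. lia.
- move: (y2 erefl) => z2. move: (y1' erefl) => z3. move: (y2' erefl) => z4.  clear y1 y2 y1' y2' A2 A4 B2 B3 B4 d1 d2 n1 n2 n3 n4 n5 n6 n7 n8 d1' d2' n1' n2' n3' n4' n5' n6' n7' n8'. lia.
- exfalso; clear -hj hj'; lia.
- move: (y1 erefl) => z1. move: (y2' erefl) => z4.  clear y1 y2 y1' y2' B1 B4 d1 d2 n1 n2 n3 n4 n5 n6 n7 n8 d1' d2' n1' n2' n3' n4' n5' n6' n7' n8'. lia.
- move: (y1 erefl) => z1. move: (y1' erefl) => z3.  clear y1 y2 y1' y2' A1 A2 A3 A4 B1 B3 d1 d2 n1 n2 n3 n4 n5 n6 n7 n8 d1' d2' n1' n2' n3' n4' n5' n6' n7' n8'. lia.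
- move: (y1 erefl) => z1. move: (y1' erefl) => z3. move: (y2' erefl) => z4.  clear y1 y2 y1' y2' A1 A3 B1 B3 B4 d1 d2 n1 n2 n3 n4 n5 n6 n7 n8 d1' d2' n1' n2' n3' n4' n5' n6' n7' n8'. lia.
- exfalso; clear -hj hj'; lia.
- move: (y1 erefl) => z1. move: (y2 erefl) => z2. move: (y2' erefl) => z4.  clear y1 y2 y1' y2' A2 A4 B1 B2 B4 d1 d2 n1 n2 n3 n4 n5 n6 n7 n8 d1' d2' n1' n2' n3' n4' n5' n6' n7' n8'. lia.
- move: (y1 erefl) => z1. move: (y2 erefl) => z2. move: (y1' erefl) => z3.  clear y1 y2 y1' y2' A1 A3 B1 B2 B3 d1 d2 n1 n2 n3 n4 n5 n6 n7 n8 d1' d2' n1' n2' n3' n4' n5' n6' n7' n8'. lia.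
- move: (y1 erefl) => z1. move: (y2 erefl) => z2. move: (y1' erefl) => z3. move: (y2' erefl) => z4.  clear y1 y2 y1' y2' A1 A2 A3 A4 B1 B2 B3 B4 d1 d2 n1 n2 n3 n4 n5 n6 n7 n8 d1' d2' n1' n2' n3' n4' n5' n6' n7' n8'. lia.
Qed.

Lemma XYset (L : nat) (Rx : finType) (N : Rx -> complex L * complex L) (RX : {set Rx})
  p q (s1 s2 : 'I_L) j1 j2 :
  is_CCRN1_order2 N -> s1 != s2 -> RX = [set p; q] ->
  PF N p s1 s2 j1 -> PF N q s2 s1 j2 -> 1 <= j1 <= 2 -> 1 <= j2 <= 2 ->
  forall u : 'I_L, u \notin [set s1; s2] ->
  ((u.+1 = szS [set s1; s2] (inp N p) \/ u.+1 = szS [set s1; s2] (inp N q)) <->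
     (u \in food_set N RX) || (u \in member_set N RX)) /\
  ((u.+1 = szS [set s1; s2] (outp N p) \/ u.+1 = szS [set s1; s2] (outp N q)) <->
     (u \in waste_set N RX) || (u \in member_set N RX)).
Proof.
move=> HC ne ERX Pp Pq hj1 hj2 u uS.
have ne' : s2 != s1 by rewrite eq_sym.
have SE : [set s2; s1] = [set s1; s2] by rewrite setUC.
case: (PF_facts HC ne Pp hj1) => tp1 tp2 _ _ _.
case: (PF_facts HC ne' Pq hj2); rewrite SE => tq1 tq2 _ _ _.
have ip := cval tp1 uS; have op := cval tp2 uS.
have iq := cval tq1 uS; have oq := cval tq2 uS.
split.
- rewrite -(in_side _ _ HC) ERX; split.
  + case=> E.
    * by exists p; [exact: set21 | rewrite ip -E eqxx].
    * by exists q; [exact: set22 | rewrite iq -E eqxx].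
  + case=> r; rewrite in_set2 => /orP[] /eqP ->.
    * by rewrite ip; case: eqP => // ->; left.
    * by rewrite iq; case: eqP => // ->; right.
- rewrite -(out_side _ _ HC) ERX; split.
  + case=> E.
    * by exists p; [exact: set21 | rewrite op -E eqxx].
    * by exists q; [exact: set22 | rewrite oq -E eqxx].
  + case=> r; rewrite in_set2 => /orP[] /eqP ->.
    * by rewrite op; case: eqP => // ->; left.
    * by rewrite oq; case: eqP => // ->; right.
Qed.

Lemma iff_false4 (t x1 x2 y1 y2 : nat) :
  x1 <> t -> x2 <> t -> y1 <> t -> y2 <> t -> (t = x1 \/ t = x2) <-> (t = y1 \/ t = y2).
Proof. lia. Qed.

Lemma mk_valid (L a b j1 j2 Xp Yp Xq Yq : nat) :
  (j1 = 1 \/ j1 = 2) -> (j2 = 1 \/ j2 = 2) -> 2 < j1 + j2 ->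
  b + Xp = j1*a + Yp -> a + Xq = j2*b + Yq -> (j1 = 2 -> Yp = 0) -> (j2 = 2 -> Yq = 0) ->
  (Xp = Yp -> Xp = 0) -> (Xq = Yq -> Xq = 0) ->
  Xp <= L -> Xp <> a -> Xp <> b -> Yp <= L -> Yp <> a -> Yp <> b ->
  Xq <= L -> Xq <> a -> Xq <> b -> Yq <= L -> Yq <> a -> Yq <> b ->
  valid L a b j1 j2 Xp Yp Xq Yq.
Proof. by move=> *; rewrite /valid; repeat split. Qed.
Theorem mainTheorem12 (R : realType) (L : nat) (Rx : finType)
    (N : Rx -> complex L * complex L) (RA : {set Rx}) (AC : {set 'I_L}) :
  is_CCRN1_order2 N ->
  (forall RB : {set Rx}, is_MAS N R RB -> has_unique_core N R RB) ->
  autocatalytic_core N R AC RA ->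
  #|RA| = 2 ->
  forall (RB : {set Rx}) (BC : {set 'I_L}),
    autocatalytic_core N R BC RB -> RB != RA ->
    FWMC N RB BC != FWMC N RA AC.
Proof.
move=> HC _ coreA cardA RB BC coreB neq.
case: (core2_species HC coreA cardA) => s1 [s2 [ne EAC]].
apply/negP => /eqP E.
case: E => Ef Ew Em Ec.
rewrite Ec in coreB Em; rewrite EAC in coreA coreB Em.
case: (pair_struct HC ne coreA) => p [q [j1 [j2 [ERA pq Pp Pq [hj1 [hj2 hj]]]]]].
case: (pair_struct HC ne coreB) => p' [q' [j1' [j2' [ERB pq' Pp' Pq' [hj1' [hj2' hj']]]]]].
have ne' : s2 != s1 by rewrite eq_sym.
have SE : [set s2; s1] = [set s1; s2] by rewrite setUC.
set S := [set s1; s2].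
have b1 : 1 <= j1 <= 2 by clear -hj1; lia.
have b2 : 1 <= j2 <= 2 by clear -hj2; lia.
have b1' : 1 <= j1' <= 2 by clear -hj1'; lia.
have b2' : 1 <= j2' <= 2 by clear -hj2'; lia.
case: (PF_facts HC ne Pp b1) => tp1 tp2 szp zp dp.
case: (PF_facts HC ne' Pq b2); rewrite SE => tq1 tq2 szq zq dq.
case: (PF_facts HC ne Pp' b1') => tp1' tp2' szp' zp' dp'.
case: (PF_facts HC ne' Pq' b2'); rewrite SE => tq1' tq2' szq' zq' dq'.
have s1S : s1 \in S by exact: set21.
have s2S : s2 \in S by exact: set22.
have V : forall c, totS S c <= 1 -> [/\ szS S c <= L, szS S c <> s1.+1 & szS S c <> s2.+1].
  move=> c h; case: (szS_props h) => h1 h2 _; split => //; exact: h2.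
case: (V _ tp1) (V _ tp2) (V _ tq1) (V _ tq2) => a1 a2 a3 [a4 a5 a6] [a7 a8 a9] [a10 a11 a12].
case: (V _ tp1') (V _ tp2') (V _ tq1') (V _ tq2') => c1 c2 c3 [c4 c5 c6] [c7 c8 c9] [c10 c11 c12].
have memE : forall u, u \notin S -> (u \in member_set N RB) = (u \in member_set N RA).
  move=> u uS; have H := Em; move/setP: H => H; move: (H u); rewrite !in_setD.
  by rewrite /S in uS; rewrite uS.
have HXY : forall t, 0 < t -> t <= L ->
    ((t = szS S (inp N p) \/ t = szS S (inp N q)) <-> (t = szS S (inp N p') \/ t = szS S (inp N q'))) /\
    ((t = szS S (outp N p) \/ t = szS S (outp N q)) <-> (t = szS S (outp N p') \/ t = szS S (outp N q'))).
  move=> t t0 tL.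
  have tL' : t.-1 < L by clear -t0 tL; lia.
  have Et : t = (Ordinal tL').+1 by rewrite /= prednK.
  rewrite Et; set u := Ordinal tL'.
  case: (boolP (u \in S)) => uS.
  + have : u = s1 \/ u = s2 by move: uS; rewrite in_set2 => /orP[] /eqP; [left|right].
    case=> ->; split; apply: iff_false4 => //.
  + case: (XYset HC ne ERA Pp Pq b1 b2 uS) => -> ->.
    case: (XYset HC ne ERB Pp' Pq' b1' b2' uS) => -> ->.
    by rewrite Ef Ew memE.
have HX : forall t, 0 < t -> t <= L ->
    (t = szS S (inp N p) \/ t = szS S (inp N q)) <-> (t = szS S (inp N p') \/ t = szS S (inp N q')).
  by move=> t h1 h2; case: (HXY t h1 h2).
have HY : forall t, 0 < t -> t <= L ->
    (t = szS S (outp N p) \/ t = szS S (outp N q)) <-> (t = szS S (outp N p') \/ t = szS S (outp N q')).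
  by move=> t h1 h2; case: (HXY t h1 h2).
have Va : valid L s1.+1 s2.+1 j1 j2 (szS S (inp N p)) (szS S (outp N p)) (szS S (inp N q)) (szS S (outp N q))
  by apply: mk_valid.
have Vb : valid L s1.+1 s2.+1 j1' j2' (szS S (inp N p')) (szS S (outp N p')) (szS S (inp N q')) (szS S (outp N q'))
  by apply: mk_valid.
have ne2 : s1.+1 <> s2.+1 by move=> [EE]; move: ne; rewrite (val_inj EE) eqxx.
case: (abstract_uniq (ltn0Sn _) (ltn0Sn _) ne2 Va Vb HX HY) => ej1 ej2 exp eyp [exq eyq].
have Epp : p = p'.
  case: HC => [[inj _] _]; apply: inj.
  have e1 : inp N p = inp N p'.
    apply: (cplx_eq tp1 tp1' exp) => t; rewrite in_set2 => /orP[] /eqP ->.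
    + by case: Pp => _ -> _ _; case: Pp' => _ -> _ _.
    + by case: Pp => -> _ _ _; case: Pp' => -> _ _ _.
  have e2 : outp N p = outp N p'.
    apply: (cplx_eq tp2 tp2' eyp) => t; rewrite in_set2 => /orP[] /eqP ->.
    + by case: Pp => _ _ -> _; case: Pp' => _ _ -> _.
    + by case: Pp => _ _ _ ->; case: Pp' => _ _ _ ->.
  by rewrite [N p]surjective_pairing [N p']surjective_pairing; move: e1 e2; rewrite /inp /outp => -> ->.
have Eqq : q = q'.
  case: HC => [[inj _] _]; apply: inj.
  have e1 : inp N q = inp N q'.
    apply: (cplx_eq tq1 tq1' exq) => t; rewrite in_set2 => /orP[] /eqP ->.
    + by case: Pq => -> _ _ _; case: Pq' => -> _ _ _.
    + by case: Pq => _ -> _ _; case: Pq' => _ -> _ _.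
  have e2 : outp N q = outp N q'.
    apply: (cplx_eq tq2 tq2' eyq) => t; rewrite in_set2 => /orP[] /eqP ->.
    + by case: Pq => _ _ _ ->; case: Pq' => _ _ _ ->.
    + by case: Pq => _ _ -> _; case: Pq' => _ _ -> _.
  by rewrite [N q]surjective_pairing [N q']surjective_pairing; move: e1 e2; rewrite /inp /outp => -> ->.
by move: neq; rewrite ERA ERB Epp Eqq eqxx.
Qed.
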